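(* Using the principal branch of the square root, for $|z|<\ln 2$, \[ \sqrt{2e^{-z}-1}=\sum_{n=0}^{\infty}(-1)^{n+1}\Bigg[\sum_{k=0}^{n}(-1)^kS(n,k)(2k-3)!!\Bigg]\frac{z^n}{n!}, \] where $S(n,k)$ are the Stirling numbers of the second kind.
   Context: $S(n,k)$ is defined by $\frac{(e^x-1)^k}{k!}=\sum_{n\ge k}S(n,k)\frac{x^n}{n!}$, so $S(0,0)=1$ and $S(n,0)=0$ for $n\ge1$. Double factorials: $(2j-1)!!=1\cdot3\cdots(2j-1)$ for $j\ge1$. For negative odd integers, $[-(2k+1)]!!=\frac{(-1)^k}{(2k-1)!!}$ for $k\ge0$, so $(-1)!!=1$ and $(-3)!!=-1$. *)

(* Defs.v *)
From Stdlib Require Import Reals ZArith.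
From Coquelicot Require Import Coquelicot.
Open Scope R_scope.

Fixpoint stirling2 (n k : nat) : nat :=
  match n, k with
  | O, O => 1%nat
  | O, S _ => 0%nat
  | S _, O => 0%nat
  | S n', S k' => ((S k') * stirling2 n' (S k') + stirling2 n' k')%nat
  end.

(* (2j-1)!! = 1*3*...*(2j-1), with (-1)!! = 1 for j = 0 (empty product). *)
Fixpoint odd_dfact (j : nat) : R :=
  match j with
  | O => 1
  | S j' => INR (2 * j' + 1) * odd_dfact j'
  end.

(* Double factorial of an odd integer m (value irrelevant for even m):
   m = 2j-1 >= -1  gives (2j-1)!!,
   m = -(2k+1) gives (-1)^k / (2k-1)!!   (so (-1)!! = 1, (-3)!! = -1). *)
Definition dfact_odd (m : Z) : R :=
  if (0 <=? m)%Z then odd_dfact (Z.to_nat ((m + 1) / 2))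
  else let k := Z.to_nat ((- m - 1) / 2) in (-1) ^ k / odd_dfact k.

Definition Cexp (z : C) : C := (exp (Re z) * cos (Im z), exp (Re z) * sin (Im z)).

(* Principal branch of the square root: for w = a + ib,
   sqrt w = sqrt((|w|+a)/2) + i sgn(b) sqrt((|w|-a)/2), with sgn(b) = 1 for b >= 0,
   -1 for b < 0; i.e. Re >= 0, and Im >= 0 when Re = 0 (argument in (-pi/2, pi/2]). *)
Definition Csqrt (w : C) : C :=
  (sqrt ((Cmod w + Re w) / 2),
   (if Rle_dec 0 (Im w) then 1 else -1) * sqrt ((Cmod w - Re w) / 2)).

Definition coef3p3 (n : nat) : R :=
  (-1) ^ (n + 1) *
  sum_f_R0 (fun k => (-1) ^ k * INR (stirling2 n k) * dfact_odd (2 * Z.of_nat k - 3)%Z) n.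

(* Main.v *)
Require Import Defs.
From Stdlib Require Import Reals ZArith Lra Lia.
From Coquelicot Require Import Coquelicot.
Open Scope R_scope.

Lemma im_le_Cmod (c : C) : Rabs (Im c) <= Cmod c.
Proof. pose proof (Rmax_Cmod c). pose proof (Rmax_r (Rabs (fst c)) (Rabs (snd c))). unfold Im. lra. Qed.

Lemma sum_n_fst (a : nat -> C) N : fst (sum_n a N) = sum_n (fun n => fst (a n)) N.
Proof.
  induction N. { rewrite !sum_O. reflexivity. }
  rewrite !sum_Sn. simpl. rewrite <- IHN. reflexivity.
Qed.

Lemma sum_n_snd (a : nat -> C) N : snd (sum_n a N) = sum_n (fun n => snd (a n)) N.
Proof.
  induction N. { rewrite !sum_O. reflexivity. }
  rewrite !sum_Sn. simpl. rewrite <- IHN. reflexivity.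
Qed.

Lemma is_series_C (a : nat -> C) (l : C) :
  is_series (fun n => Re (a n)) (Re l) -> is_series (fun n => Im (a n)) (Im l) -> is_series a l.
Proof.
  unfold is_series. intros H1 H2.
  apply filterlim_locally. intros eps.
  pose proof (proj1 (filterlim_locally _ _) H1 eps) as G1.
  pose proof (proj1 (filterlim_locally _ _) H2 eps) as G2.
  generalize (filter_and _ _ G1 G2). apply filter_imp.
  intros N [B1 B2]. split.
  - unfold Re in B1. rewrite <- sum_n_fst in B1. exact B1.
  - unfold Im in B2. rewrite <- sum_n_snd in B2. exact B2.
Qed.

Lemma is_series_Re (a : nat -> C) (l : C) :
  is_series a l -> is_series (fun n => Re (a n)) (Re l).
Proof.
  unfold is_series. intros H.
  apply filterlim_locally. intros eps.
  pose proof (proj1 (filterlim_locally _ _) H eps) as G.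
  revert G. apply filter_imp. intros N [B1 B2].
  unfold Re. rewrite <- sum_n_fst. exact B1.
Qed.

Lemma is_series_Im (a : nat -> C) (l : C) :
  is_series a l -> is_series (fun n => Im (a n)) (Im l).
Proof.
  unfold is_series. intros H.
  apply filterlim_locally. intros eps.
  pose proof (proj1 (filterlim_locally _ _) H eps) as G.
  revert G. apply filter_imp. intros N [B1 B2].
  unfold Im. rewrite <- sum_n_snd. exact B2.
Qed.

Lemma ex_abs_le (a : nat -> R) (b : nat -> R) :
  (forall n, Rabs (a n) <= b n) -> ex_series b -> ex_series (fun n => Rabs (a n)).
Proof.
  intros H E. apply (@ex_series_le R_AbsRing R_CompleteNormedModule _ b); auto.
  intros n. unfold norm; simpl. unfold abs; simpl. rewrite Rabs_Rabsolu. apply H.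
Qed.

Lemma ex_abs_Re (a : nat -> C) : ex_series (fun n => Cmod (a n)) -> ex_series (fun n => Rabs (Re (a n))).
Proof. intros. apply (ex_abs_le _ (fun n => Cmod (a n))); auto. intros; apply re_le_Cmod. Qed.
Lemma ex_abs_Im (a : nat -> C) : ex_series (fun n => Cmod (a n)) -> ex_series (fun n => Rabs (Im (a n))).
Proof. intros. apply (ex_abs_le _ (fun n => Cmod (a n))); auto. intros; apply im_le_Cmod. Qed.

Lemma ex_series_of_abs (a : nat -> R) : ex_series (fun n => Rabs (a n)) -> ex_series a.
Proof. apply ex_series_Rabs. Qed.

Lemma CauchyC (a b : nat -> C) (A B : C) :
  is_series a A -> is_series b B ->
  ex_series (fun n => Cmod (a n)) -> ex_series (fun n => Cmod (b n)) ->
  is_series (fun n => sum_n (fun k => Cmult (a k) (b (n-k)%nat)) n) (Cmult A B).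
Proof.
  intros HA HB EA EB.
  pose proof (is_series_Re _ _ HA) as ArS. pose proof (is_series_Im _ _ HA) as AiS.
  pose proof (is_series_Re _ _ HB) as BrS. pose proof (is_series_Im _ _ HB) as BiS.
  pose proof (ex_abs_Re _ EA). pose proof (ex_abs_Im _ EA).
  pose proof (ex_abs_Re _ EB). pose proof (ex_abs_Im _ EB).
  apply is_series_C.
  - pose proof (is_series_mult _ _ _ _ ArS BrS H H1) as P1.
    pose proof (is_series_mult _ _ _ _ AiS BiS H0 H2) as P2.
    pose proof (is_series_minus _ _ _ _ P1 P2) as P.
    eapply is_series_ext; [|exact P].
    intros n. unfold Re at 3. rewrite sum_n_fst. rewrite sum_n_Reals.
    change plus with Rplus. change opp with Ropp. simpl.
    symmetry. rewrite (minus_sum (fun k => Re (a k) * Re (b (n - k)%nat)) (fun k => Im (a k) * Im (b (n - k)%nat))). reflexivity.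
  - pose proof (is_series_mult _ _ _ _ ArS BiS H H2) as P1.
    pose proof (is_series_mult _ _ _ _ AiS BrS H0 H1) as P2.
    pose proof (is_series_plus _ _ _ _ P1 P2) as P.
    eapply is_series_ext; [|exact P].
    intros n. unfold Im at 3. rewrite sum_n_snd. rewrite sum_n_Reals.
    change plus with Rplus. simpl.
    symmetry. rewrite (plus_sum (fun k => Re (a k) * Im (b (n - k)%nat)) (fun k => Im (a k) * Re (b (n - k)%nat))). reflexivity.
Qed.

Lemma exR_le (a b : nat -> R) : (forall n, Rabs (a n) <= b n) -> ex_series b -> ex_series a.
Proof. intros. apply ex_series_Rabs. apply (ex_abs_le _ b); auto. Qed.

Lemma exR_plus (a b : nat -> R) : ex_series a -> ex_series b -> ex_series (fun n => a n + b n).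
Proof. intros. apply (@ex_series_plus R_AbsRing R_NormedModule); auto. Qed.

Lemma exR_minus (a b : nat -> R) : ex_series a -> ex_series b -> ex_series (fun n => a n - b n).
Proof. intros. apply (@ex_series_minus R_AbsRing R_NormedModule); auto. Qed.

Lemma exR_scal (c : R) (a : nat -> R) : ex_series a -> ex_series (fun n => c * a n).
Proof. intros [l H]. exists (c * l). apply (@is_series_scal R_AbsRing R_NormedModule c a l H). Qed.

Lemma exR_ext (a b : nat -> R) : (forall n, a n = b n) -> ex_series a -> ex_series b.
Proof. intros E [l H]. exists l. eapply is_series_ext; eauto. Qed.

Lemma exR_tail (a : nat -> R) (n : nat) : ex_series a -> ex_series (fun k => a (n + k)%nat).
Proof. intros. apply (ex_series_incr_n a n). auto. Qed.

Lemma Series_split (a : nat -> R) (N : nat) : ex_series a ->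
  Series a = sum_f_R0 a N + Series (fun k => a (S N + k)%nat).
Proof. intros. rewrite (Series_incr_n a (S N)); auto; lia. Qed.

Lemma tail_bound (a b : nat -> R) (A M : R) (N : nat) :
  is_series a A -> (forall n, Rabs (a n) <= b n) -> is_series b M ->
  Rabs (A - sum_f_R0 a N) <= M - sum_f_R0 b N.
Proof.
  intros HA Hab HM.
  assert (Ea : ex_series a) by (exists A; auto).
  assert (Eb : ex_series b) by (exists M; auto).
  rewrite <- (is_series_unique _ _ HA), <- (is_series_unique _ _ HM).
  rewrite (Series_split a N Ea), (Series_split b N Eb).
  replace (sum_f_R0 a N + Series (fun k => a (S N + k)%nat) - sum_f_R0 a N)
    with (Series (fun k => a (S N + k)%nat)) by ring.
  replace (sum_f_R0 b N + Series (fun k => b (S N + k)%nat) - sum_f_R0 b N)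
    with (Series (fun k => b (S N + k)%nat)) by ring.
  eapply Rle_trans. apply Series_Rabs.
  - apply (ex_abs_le _ (fun k => b (S N + k)%nat)); auto. apply exR_tail; auto.
  - apply Series_le. intros; split; [apply Rabs_pos| auto]. apply exR_tail; auto.
Qed.

Lemma finite_unif (f : nat -> nat -> R) (K : nat) (eps : R) : 0 < eps ->
  (forall k, forall e, 0 < e -> exists N0, forall N, (N >= N0)%nat -> f N k < e) ->
  exists N0, forall N, (N >= N0)%nat -> forall k, (k <= K)%nat -> f N k < eps.
Proof.
  intros He H. induction K.
  - destruct (H 0%nat eps He) as [N0 HN0]. exists N0. intros N HN k Hk.
    replace k with 0%nat by lia. auto.
  - destruct IHK as [N1 H1]. destruct (H (S K) eps He) as [N2 H2].
    exists (N1 + N2)%nat. intros N HN k Hk.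
    destruct (Nat.eq_dec k (S K)). subst. apply H2; lia. apply H1; lia.
Qed.

Lemma fubini (a b : nat -> nat -> R) (A M Cn : nat -> R) :
  (forall k, is_series (a k) (A k)) ->
  (forall k n, Rabs (a k n) <= b k n) ->
  (forall k, is_series (b k) (M k)) ->
  ex_series M ->
  (forall n, is_series (fun k => a k n) (Cn n)) ->
  is_series Cn (Series A).
Proof.
  intros HA Hab HM EM HC.
  assert (Eak : forall k, ex_series (a k)) by (intros k; exists (A k); auto).
  assert (Ebk : forall k, ex_series (b k)) by (intros k; exists (M k); auto).
  assert (Hb0 : forall k n, 0 <= b k n) by (intros k n; eapply Rle_trans; [apply Rabs_pos|apply Hab]).
  assert (HAM : forall k, Rabs (A k) <= M k).
  { intros k. pose proof (tail_bound (a k) (b k) (A k) (M k) 0 (HA k) (Hab k) (HM k)) as T.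
    simpl in T. pose proof (Hab k 0%nat). pose proof (Rabs_triang (A k - a k 0%nat) (a k 0%nat)).
    replace (A k - a k 0%nat + a k 0%nat) with (A k) in H0 by ring. lra. }
  assert (EA : ex_series A) by (apply (exR_le _ M); auto).
  assert (PS : forall N, sum_f_R0 Cn N = Series (fun k => sum_f_R0 (a k) N)).
  { induction N.
    - simpl. symmetry. apply is_series_unique. apply HC.
    - simpl. rewrite IHN. rewrite Series_plus.
      + f_equal. symmetry. apply is_series_unique. apply HC.
      + clear IHN. induction N.
        * simpl. exists (Cn 0%nat). apply HC.
        * simpl. apply exR_plus; auto. exists (Cn (S N)). apply HC.
      + exists (Cn (S N)). apply HC. }
  assert (ESk : forall N, ex_series (fun k => sum_f_R0 (a k) N)).
  { induction N. - simpl. exists (Cn 0%nat). apply HC.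
    - simpl. apply exR_plus; auto. exists (Cn (S N)). apply HC. }
  set (t := fun N k => M k - sum_f_R0 (b k) N).
  assert (Ht0 : forall N k, 0 <= t N k).
  { intros N k. pose proof (tail_bound (a k) (b k) (A k) (M k) N (HA k) (Hab k) (HM k)).
    pose proof (Rabs_pos (A k - sum_f_R0 (a k) N)). unfold t. lra. }
  assert (HtM : forall N k, t N k <= M k).
  { intros N k. unfold t. assert (0 <= sum_f_R0 (b k) N).
    { apply cond_pos_sum. intros; auto. } lra. }
  assert (Hpart : forall k N, 0 <= sum_f_R0 (b k) N <= M k).
  { intros k N. split. apply cond_pos_sum. intros; auto.
    pose proof (tail_bound (b k) (b k) (M k) (M k) N (HM k)).
    assert (forall n, Rabs (b k n) <= b k n) by (intros; rewrite Rabs_right; [lra| apply Rle_ge; auto]).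
    specialize (H H0 (HM k)). pose proof (Rabs_pos (M k - sum_f_R0 (b k) N)). lra. }
  assert (Et : forall N, ex_series (t N)).
  { intros N. apply (exR_le _ M); auto. intros k. rewrite Rabs_right; auto. apply Rle_ge; auto. }
  apply is_series_Reals. intros eps Heps.
  assert (EMs := Series_correct _ EM). apply is_series_Reals in EMs.
  destruct (EMs (eps/2)) as [K HK]; [lra|].
  assert (HK' := HK K (le_n K)). unfold R_dist in HK'.
  set (e' := eps / (2 * INR (S K))).
  assert (He' : 0 < e') by (unfold e'; apply Rdiv_lt_0_compat; [lra| apply Rmult_lt_0_compat; [lra| apply lt_0_INR; lia]]).
  destruct (finite_unif t K e' He') as [N0 HN0].
  { intros k e He. pose proof (HM k) as Hk. apply is_series_Reals in Hk.
    destruct (Hk e He) as [N0 HN0]. exists N0. intros N HN. specialize (HN0 N HN).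
    unfold R_dist in HN0. unfold t. rewrite Rabs_minus_sym in HN0.
    pose proof (Rle_abs (M k - sum_f_R0 (b k) N)). lra. }
  exists N0. intros N HN. unfold R_dist. rewrite PS.
  rewrite <- Series_minus; auto.
  eapply Rle_lt_trans. apply Series_Rabs.
  { apply (ex_abs_le _ (t N)); auto. intros k. rewrite Rabs_minus_sym. apply tail_bound with (a := a k); auto. }
  eapply Rle_lt_trans. apply (Series_le _ (t N)); auto.
  { intros k; split. apply Rabs_pos. rewrite Rabs_minus_sym. apply tail_bound with (a := a k); auto. }
  rewrite (Series_split (t N) K (Et N)).
  assert (S1 : sum_f_R0 (t N) K <= eps / 2).
  { eapply Rle_trans. apply (sum_Rle _ (fun _ => e')). intros k Hk. left. apply HN0; auto.
    rewrite sum_cte. unfold e'. right. field. apply not_0_INR. lia. }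
  assert (S2 : Series (fun k => t N (S K + k)%nat) <= Series (fun k => M (S K + k)%nat)).
  { apply Series_le. intros; split; auto. apply exR_tail; auto. }
  rewrite (Series_split M K EM) in HK'.
  assert (S3 : Series (fun k => M (S K + k)%nat) < eps/2).
  { rewrite Rabs_minus_sym in HK'. pose proof (Rle_abs (sum_f_R0 M K + Series (fun k : nat => M (S K + k)%nat) - sum_f_R0 M K)). lra. }
  lra.
Qed.

Lemma exp_series (x : R) : is_series (fun n => x ^ n / INR (fact n)) (exp x).
Proof.
  pose proof (is_exp_Reals x) as H. unfold is_pseries in H.
  eapply is_series_ext; [|exact H]. intros n. simpl. rewrite pow_n_pow.
  change scal with Rmult. simpl. unfold Rdiv. ring.
Qed.

Lemma nonneg_partial_le (b : nat -> R) (M : R) N :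
  (forall n, 0 <= b n) -> is_series b M -> sum_f_R0 b N <= M.
Proof.
  intros H HM. pose proof (tail_bound b b M M N HM).
  assert (forall n, Rabs (b n) <= b n) by (intros; rewrite Rabs_right; [lra| apply Rle_ge; auto]).
  specialize (H0 H1 HM). pose proof (Rabs_pos (M - sum_f_R0 b N)). lra.
Qed.

Lemma term_le_sum (f : nat -> R) n : (forall k, 0 <= f k) -> f n <= sum_f_R0 f n.
Proof.
  intros H. destruct n; simpl. lra. pose proof (cond_pos_sum f n (fun k => H k)). lra.
Qed.

Lemma fact_pos n : 0 < INR (fact n).
Proof. apply lt_0_INR. apply lt_O_fact. Qed.

Lemma exp_term_le (t : R) n : 0 <= t -> t ^ n / INR (fact n) <= exp t.
Proof.
  intros Ht. eapply Rle_trans. apply (term_le_sum (fun n => t ^ n / INR (fact n))).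
  - intros k. apply Rmult_le_pos. apply pow_le; auto. left. apply Rinv_0_lt_compat, fact_pos.
  - apply nonneg_partial_le. intros k. apply Rmult_le_pos. apply pow_le; auto. left. apply Rinv_0_lt_compat, fact_pos.
    apply exp_series.
Qed.

Lemma exp_quad (t : R) : 0 <= t -> 1 + t + t ^ 2 / 2 <= exp t.
Proof.
  intros Ht. pose proof (nonneg_partial_le (fun n => t ^ n / INR (fact n)) (exp t) 2).
  simpl in H. 
  assert (1 / 1 + t * 1 / 1 + t * (t * 1) / 2 <= exp t).
  { replace 2 with (INR (fact 2)) by (simpl; lra). apply H.
    intros k. apply Rmult_le_pos. apply pow_le; auto. left. apply Rinv_0_lt_compat, fact_pos.
    apply exp_series. }
  simpl. lra.
Qed.

Ltac toR := match goal with |- @eq _ ?a ?b => change (@eq R a b) end.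
Ltac toC := match goal with |- @eq _ ?a ?b => change (@eq C a b) end.

Lemma split_even (a : nat -> R) (L : R) :
  (forall m, a (2*m+1)%nat = 0) -> is_series (fun m => a (2*m)%nat) L -> is_series a L.
Proof.
  intros H0 HL. apply is_series_Reals in HL. apply is_series_Reals.
  assert (P : forall m, sum_f_R0 a (2*m) = sum_f_R0 (fun m => a (2*m)%nat) m /\
                        sum_f_R0 a (2*m+1) = sum_f_R0 (fun m => a (2*m)%nat) m).
  { induction m.
    - pose proof (H0 0%nat). simpl in *. lra.
    - destruct IHm as [I1 I2].
      assert (E1 : sum_f_R0 a (S (2*m+1)) = sum_f_R0 a (2*m+1) + a (S (2*m+1))) by reflexivity.
      assert (E2 : sum_f_R0 a (S (S (2*m+1))) = sum_f_R0 a (S (2*m+1)) + a (S (S (2*m+1)))) by reflexivity.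
      assert (E3 : sum_f_R0 (fun m => a (2*m)%nat) (S m) = sum_f_R0 (fun m => a (2*m)%nat) m + a (2 * S m)%nat) by reflexivity.
      replace (2 * S m + 1)%nat with (S (S (2*m+1))) by lia.
      replace (2 * S m)%nat with (S (2*m+1)) by lia.
      rewrite E3, E2, E1, I2. replace (S (S (2*m+1))) with (2 * S m + 1)%nat by lia. rewrite H0.
      replace (2 * S m)%nat with (S (2*m+1)) by lia. split; ring. }
  intros eps Heps. destruct (HL eps Heps) as [N HN]. exists (2*N)%nat. intros n Hn.
  destruct (Nat.Even_or_Odd n) as [[m Hm]|[m Hm]]; subst n.
  - rewrite (proj1 (P m)). apply HN. lia.
  - rewrite (proj2 (P m)). apply HN. lia.
Qed.

Lemma split_odd (a : nat -> R) (L : R) :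
  (forall m, a (2*m)%nat = 0) -> is_series (fun m => a (2*m+1)%nat) L -> is_series a L.
Proof.
  intros H0 HL. apply is_series_Reals in HL. apply is_series_Reals.
  assert (P : forall m, sum_f_R0 a (2*m+1) = sum_f_R0 (fun m => a (2*m+1)%nat) m /\
                        sum_f_R0 a (2*m+2) = sum_f_R0 (fun m => a (2*m+1)%nat) m).
  { induction m.
    - pose proof (H0 0%nat). pose proof (H0 1%nat). simpl in *. lra.
    - destruct IHm as [I1 I2].
      assert (E1 : sum_f_R0 a (S (2*m+2)) = sum_f_R0 a (2*m+2) + a (S (2*m+2))) by reflexivity.
      assert (E2 : sum_f_R0 a (S (S (2*m+2))) = sum_f_R0 a (S (2*m+2)) + a (S (S (2*m+2)))) by reflexivity.
      assert (E3 : sum_f_R0 (fun m => a (2*m+1)%nat) (S m) = sum_f_R0 (fun m => a (2*m+1)%nat) m + a (2 * S m + 1)%nat) by reflexivity.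
      replace (2 * S m + 2)%nat with (S (S (2*m+2))) by lia.
      replace (2 * S m + 1)%nat with (S (2*m+2)) by lia.
      rewrite E3, E2, E1, I2. replace (S (S (2*m+2))) with (2 * S (S m))%nat by lia. rewrite H0.
      replace (2 * S m + 1)%nat with (S (2*m+2)) by lia. split; ring. }
  intros eps Heps. destruct (HL eps Heps) as [N HN]. exists (2*N+1)%nat. intros n Hn.
  destruct (Nat.Even_or_Odd n) as [[m Hm]|[m Hm]]; subst n.
  - destruct m. lia. replace (2 * S m)%nat with (2*m+2)%nat by lia.
    rewrite (proj2 (P m)). apply HN. lia.
  - rewrite (proj1 (P m)). apply HN. lia.
Qed.

Lemma cos_series (y : R) : is_series (fun m => cos_n m * (y ^ 2) ^ m) (cos y).
Proof.
  unfold cos. destruct (exist_cos (Rsqr y)) as [l Hl]. unfold cos_in in Hl.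
  apply is_series_Reals. replace (y ^ 2) with (Rsqr y) by (unfold Rsqr; ring). exact Hl.
Qed.

Lemma sin_series (y : R) : is_series (fun m => y * (sin_n m * (y ^ 2) ^ m)) (sin y).
Proof.
  unfold sin. destruct (exist_sin (Rsqr y)) as [l Hl]. unfold sin_in in Hl.
  apply is_series_Reals in Hl.
  replace (y ^ 2) with (Rsqr y) by (unfold Rsqr; ring).
  apply (@is_series_scal R_AbsRing R_NormedModule y _ _ Hl).
Qed.

Lemma ipow_even (y : R) m : Cpow (0, y) (2*m) = ((-1)^m * y^(2*m), 0).
Proof.
  induction m. simpl. unfold RtoC. f_equal; ring.
  replace (2 * S m)%nat with (S (S (2*m))) by lia. rewrite !Cpow_S, IHm.
  replace (S (S (2*m))) with (2 + 2 * m)%nat by lia. rewrite pow_add.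
  unfold Cmult; simpl; f_equal; ring.
Qed.

Lemma ipow_odd (y : R) m : Cpow (0, y) (2*m+1) = (0, (-1)^m * y^(2*m+1)).
Proof.
  replace (2*m+1)%nat with (S (2*m)) by lia. rewrite Cpow_S, ipow_even.
  unfold Cmult; simpl; f_equal; ring.
Qed.

Definition ec (a : C) (n : nat) : C := Cmult (RtoC (/ INR (fact n))) (Cpow a n).

Lemma Ceq (u v : C) : Re u = Re v -> Im u = Im v -> u = v.
Proof. destruct u, v. unfold Re, Im; simpl. intros; subst; reflexivity. Qed.

Lemma Re_RtoC_mult r c : Re (Cmult (RtoC r) c) = r * Re c.
Proof. destruct c. unfold Re; simpl. ring. Qed.
Lemma Im_RtoC_mult r c : Im (Cmult (RtoC r) c) = r * Im c.
Proof. destruct c. unfold Im; simpl. ring. Qed.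

Lemma is_series_zero : is_series (fun _ : nat => 0) 0.
Proof.
  apply is_series_Reals. intros eps He. exists 0%nat. intros n _. rewrite sum_cte.
  unfold R_dist. rewrite Rmult_0_l, Rminus_0_r, Rabs_R0. auto.
Qed.

Lemma E_iy (y : R) : is_series (ec (0, y)) (cos y, sin y).
Proof.
  apply is_series_C; [change (Re (cos y, sin y)) with (cos y) | change (Im (cos y, sin y)) with (sin y)].
  - apply split_even.
    + intros m. unfold ec. rewrite Re_RtoC_mult, ipow_odd. simpl. ring.
    + eapply is_series_ext; [|apply (cos_series y)]. intros m. toR.
      unfold ec. rewrite Re_RtoC_mult, ipow_even. unfold Re; cbn [fst snd]. unfold cos_n.
      rewrite pow_mult. unfold Rdiv. ring.
  - apply split_odd.
    + intros m. unfold ec. rewrite Im_RtoC_mult, ipow_even. simpl. ring.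
    + eapply is_series_ext; [|apply (sin_series y)]. intros m. toR.
      unfold ec. rewrite Im_RtoC_mult, ipow_odd. unfold Im; cbn [fst snd]. unfold sin_n.
      rewrite pow_add, pow_mult. unfold Rdiv. ring.
Qed.

Lemma E_x (x : R) : is_series (ec (RtoC x)) (RtoC (exp x)).
Proof.
  apply is_series_C; [change (Re (RtoC (exp x))) with (exp x) | change (Im (RtoC (exp x))) with 0].
  - eapply is_series_ext; [|apply (exp_series x)]. intros n. toR.
    unfold ec. rewrite Re_RtoC_mult, <- RtoC_pow. simpl. unfold Rdiv. ring.
  - eapply is_series_ext; [|apply is_series_zero]. intros n. toR.
    unfold ec. rewrite Im_RtoC_mult, <- RtoC_pow. simpl. ring.
Qed.

Lemma Cmod_ec a n : Cmod (ec a n) = Cmod a ^ n / INR (fact n).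
Proof.
  unfold ec. rewrite Cmod_mult, Cmod_R, Cmod_pow. rewrite Rabs_right.
  unfold Rdiv; ring. left. apply Rinv_0_lt_compat, fact_pos.
Qed.

Lemma ex_Cmod_ec a : ex_series (fun n => Cmod (ec a n)).
Proof. exists (exp (Cmod a)). eapply is_series_ext; [|apply exp_series]. intros; rewrite Cmod_ec; auto. Qed.

Lemma sum_n_front {G : AbelianMonoid} (f : nat -> G) n :
  sum_n f (S n) = plus (f 0%nat) (sum_n (fun k => f (S k)) n).
Proof.
  induction n.
  - rewrite sum_Sn, !sum_O. reflexivity.
  - rewrite sum_Sn, IHn, sum_Sn. rewrite plus_assoc. reflexivity.
Qed.

Lemma RtoC_neq0 (r : R) : r <> 0 -> RtoC r <> 0%C.
Proof. intros H E. apply H. unfold RtoC in E. injection E. auto. Qed.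

Lemma Cmult_cancel (c x y : C) : c <> 0%C -> Cmult c x = Cmult c y -> x = y.
Proof.
  intros Hc E. assert (Cmult (Cinv c) (Cmult c x) = Cmult (Cinv c) (Cmult c y)) by (rewrite E; auto).
  replace x with (Cmult (Cinv c) (Cmult c x)) by (field; auto).
  replace y with (Cmult (Cinv c) (Cmult c y)) by (field; auto). auto.
Qed.

Lemma ec_S a k : Cmult (RtoC (INR (S k))) (ec a (S k)) = Cmult a (ec a k).
Proof.
  unfold ec. rewrite Cpow_S.
  assert (Hr : INR (S k) * / INR (fact (S k)) = / INR (fact k)).
  { rewrite fact_simpl, mult_INR. field. split. apply not_0_INR, fact_neq_0. apply not_0_INR; lia. }
  transitivity (Cmult (RtoC (INR (S k) * / INR (fact (S k)))) (Cmult a (Cpow a k))).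
  { rewrite RtoC_mult. ring. }
  rewrite Hr. ring.
Qed.

Lemma ec_0 a : ec a 0 = RtoC 1.
Proof. unfold ec. simpl. apply Ceq; simpl; field. Qed.

Lemma csum_mult_l (c : C) (f : nat -> C) n :
  Cmult c (sum_n f n) = sum_n (fun k => Cmult c (f k)) n.
Proof.
  induction n. rewrite !sum_O. reflexivity.
  rewrite !sum_Sn, <- IHn. exact (Cmult_plus_distr_l _ _ _).
Qed.

Lemma csum_plus (f g : nat -> C) n :
  sum_n (fun k => Cplus (f k) (g k)) n = Cplus (sum_n f n) (sum_n g n).
Proof.
  induction n. rewrite !sum_O. reflexivity.
  rewrite !sum_Sn, IHn. apply Ceq; simpl; ring.
Qed.

Lemma csum_front (f : nat -> C) n :
  sum_n f (S n) = Cplus (f 0%nat) (sum_n (fun k => f (S k)) n).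
Proof.
  induction n.
  - rewrite sum_Sn, !sum_O. reflexivity.
  - rewrite sum_Sn, IHn, sum_Sn. apply Ceq; simpl; ring.
Qed.

Lemma csum_back (f : nat -> C) n : sum_n f (S n) = Cplus (sum_n f n) (f (S n)).
Proof. rewrite sum_Sn. reflexivity. Qed.

Lemma csum_ext (f g : nat -> C) n : (forall k, (k <= n)%nat -> f k = g k) -> sum_n f n = sum_n g n.
Proof. apply sum_n_ext_loc. Qed.

Lemma binom_ec (a b : C) n :
  sum_n (fun k => Cmult (ec a k) (ec b (n - k)%nat)) n = ec (Cplus a b) n.
Proof.
  induction n.
  - rewrite sum_O. simpl. rewrite !ec_0. apply Ceq; simpl; ring.
  - apply (Cmult_cancel (RtoC (INR (S n)))). apply RtoC_neq0, not_0_INR; lia.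
    rewrite ec_S, <- IHn.
    rewrite csum_mult_l.
    rewrite (csum_ext _ (fun k => Cplus (Cmult (Cmult (RtoC (INR k)) (ec a k)) (ec b (S n - k)%nat))
                                   (Cmult (ec a k) (Cmult (RtoC (INR (S n - k))) (ec b (S n - k)%nat))))).
    2: { intros k Hk.
         replace (INR (S n)) with (INR k + INR (S n - k)) by (rewrite <- plus_INR; f_equal; lia).
         rewrite RtoC_plus. ring. }
    rewrite csum_plus. rewrite csum_front, csum_back.
    replace (S n - S n)%nat with 0%nat by lia.
    rewrite (csum_ext (fun k => Cmult (Cmult (RtoC (INR (S k))) (ec a (S k))) (ec b (S n - S k)%nat))
                      (fun k => Cmult a (Cmult (ec a k) (ec b (n - k)%nat)))).
    2: { intros k _. simpl (S n - S k)%nat. rewrite ec_S. ring. }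
    rewrite (csum_ext (fun k => Cmult (ec a k) (Cmult (RtoC (INR (S n - k))) (ec b (S n - k)%nat)))
               (fun k => Cmult b (Cmult (ec a k) (ec b (n - k)%nat)))).
    2: { intros k Hk. replace (S n - k)%nat with (S (n - k)) by lia. rewrite ec_S. ring. }
    rewrite <- !csum_mult_l. simpl (INR 0).
    set (T := sum_n (fun k => Cmult (ec a k) (ec b (n - k)%nat)) n).
    ring.
Qed.

Lemma is_series_C_eq (a b : nat -> C) (l l' : C) :
  is_series a l -> l = l' -> (forall n, a n = b n) -> is_series b l'.
Proof. intros H E1 E2. subst. eapply is_series_ext; eauto. Qed.

Lemma Cexp_series (z : C) : is_series (ec z) (Cexp z).
Proof.
  destruct z as [x y].
  pose proof (CauchyC (ec (RtoC x)) (ec (0,y)) _ _ (E_x x) (E_iy y) (ex_Cmod_ec _) (ex_Cmod_ec _)) as H.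
  eapply is_series_C_eq. exact H.
  - unfold Cexp. apply Ceq; simpl; ring.
  - intros n. transitivity (ec (Cplus (RtoC x) (0,y)) n). exact (binom_ec _ _ n). f_equal. apply Ceq; simpl; ring.
Qed.

Fixpoint beta (n : nat) : R :=
  match n with O => 1 | S m => beta m * (2 * INR m + 1) / (2 * INR m + 2) end.

Definition alpha (n : nat) : R :=
  match n with O => 1 | S m => - beta m / (2 * INR m + 2) end.

Lemma beta_bounds n : 0 < beta n <= 1.
Proof.
  induction n. simpl; lra.
  simpl. pose proof (pos_INR n). destruct IHn. split.
  - apply Rdiv_lt_0_compat; nra.
  - apply Rmult_le_reg_r with (2 * INR n + 2). lra. unfold Rdiv. rewrite Rmult_assoc, Rinv_l; nra.
Qed.

Lemma alpha_bound n : Rabs (alpha n) <= 1.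
Proof.
  destruct n. simpl. rewrite Rabs_R1. lra.
  simpl. pose proof (beta_bounds n). pose proof (pos_INR n).
  rewrite Rabs_left1.
  - apply Rmult_le_reg_r with (2 * INR n + 2). lra. unfold Rdiv.
    replace (- (- beta n * / (2 * INR n + 2)) * (2 * INR n + 2)) with (beta n) by (field; lra). lra.
  - unfold Rdiv. assert (0 < / (2 * INR n + 2)) by (apply Rinv_0_lt_compat; lra). nra.
Qed.

Lemma alpha_S_nonpos n : alpha (S n) <= 0.
Proof.
  simpl. pose proof (beta_bounds n). pose proof (pos_INR n).
  unfold Rdiv. assert (0 < / (2 * INR n + 2)) by (apply Rinv_0_lt_compat; lra). nra.
Qed.

Lemma sum_alpha n : sum_f_R0 alpha n = beta n.
Proof.
  induction n. reflexivity.
  simpl sum_f_R0. rewrite IHn. simpl. pose proof (pos_INR n). field. lra.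
Qed.

Lemma alpha_rec k : (2 * INR k + 2) * alpha (S k) = (2 * INR k - 1) * alpha k.
Proof.
  pose proof (pos_INR k). destruct k.
  - simpl. field.
  - change (alpha (S (S k))) with (- beta (S k) / (2 * INR (S k) + 2)).
    change (alpha (S k)) with (- beta k / (2 * INR k + 2)).
    change (beta (S k)) with (beta k * (2 * INR k + 1) / (2 * INR k + 2)).
    rewrite S_INR. pose proof (pos_INR k). field. lra.
Qed.

Definition conv (n : nat) : R := sum_f_R0 (fun j => alpha j * alpha (n - j)) n.

Lemma conv_rec n : 2 * (INR n + 1) * conv (S n) = (2 * INR n - 2) * conv n.
Proof.
  unfold conv.
  rewrite scal_sum.
  rewrite (sum_eq _ (fun j => (2 * INR j) * alpha j * alpha (S n - j) + alpha j * ((2 * INR (S n - j)) * alpha (S n - j)))).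
  2: { intros i Hi. replace (INR n + 1) with (INR i + INR (S n - i)).
       ring. rewrite <- plus_INR. replace (i + (S n - i))%nat with (S n) by lia. rewrite S_INR. ring. }
  rewrite (plus_sum (fun j => 2 * INR j * alpha j * alpha (S n - j)) (fun j => alpha j * (2 * INR (S n - j) * alpha (S n - j)))).
  rewrite decomp_sum by lia. simpl pred.
  simpl (INR 0).
  change (sum_f_R0 (fun i => alpha i * (2 * INR (S n - i) * alpha (S n - i))) (S n))
    with (sum_f_R0 (fun i => alpha i * (2 * INR (S n - i) * alpha (S n - i))) n
          + alpha (S n) * (2 * INR (S n - S n) * alpha (S n - S n))).
  replace (S n - S n)%nat with 0%nat by lia. simpl (INR 0).
  rewrite (sum_eq (fun i => 2 * INR (S i) * alpha (S i) * alpha (S n - S i))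
                  (fun i => (2 * INR i - 1) * alpha i * alpha (n - i))).
  2: { intros i Hi. simpl (S n - S i)%nat. rewrite <- alpha_rec. rewrite S_INR. ring. }
  rewrite (sum_eq (fun i => alpha i * (2 * INR (S n - i) * alpha (S n - i)))
                  (fun i => (2 * INR (n - i) - 1) * alpha i * alpha (n - i))).
  2: { intros i Hi. replace (S n - i)%nat with (S (n - i)) by lia.
       replace (2 * INR (S (n - i)) * alpha (S (n - i))) with ((2 * INR (n - i) + 2) * alpha (S (n - i))) by (rewrite S_INR; ring).
       rewrite alpha_rec. ring. }
  rewrite scal_sum.
  replace (2 * 0 * alpha 0 * alpha (S n - 0) + sum_f_R0 (fun i => (2 * INR i - 1) * alpha i * alpha (n - i)) n +
   (sum_f_R0 (fun i => (2 * INR (n - i) - 1) * alpha i * alpha (n - i)) n + alpha (S n) * (2 * 0 * alpha 0)))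
    with (sum_f_R0 (fun i => (2 * INR i - 1) * alpha i * alpha (n - i)) n +
          sum_f_R0 (fun i => (2 * INR (n - i) - 1) * alpha i * alpha (n - i)) n) by ring.
  rewrite <- (plus_sum (fun i => (2 * INR i - 1) * alpha i * alpha (n - i)) (fun i => (2 * INR (n - i) - 1) * alpha i * alpha (n - i))). apply sum_eq. intros i Hi.
  rewrite minus_INR by lia. ring.
Qed.

Lemma conv_0 : conv 0 = 1.
Proof. unfold conv; simpl; ring. Qed.
Lemma conv_1 : conv 1 = -1.
Proof. unfold conv; simpl. field. Qed.
Lemma conv_ge2 n : conv (S (S n)) = 0.
Proof.
  induction n.
  - pose proof (conv_rec 1). simpl in H. replace (2 * (1 + 1)) with 4 in H by ring.
    replace (2 * 1 - 2) with 0 in H by ring. lra.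
  - pose proof (conv_rec (S (S n))). rewrite IHn in H. rewrite Rmult_0_r in H.
    pose proof (pos_INR (S (S n))).
    apply Rmult_integral in H. destruct H; auto. lra.
Qed.

Lemma is_series_R_eq (a b : nat -> R) (l l' : R) :
  is_series a l -> l = l' -> (forall n, a n = b n) -> is_series b l'.
Proof. intros H E1 E2. subst. eapply is_series_ext; eauto. Qed.

Definition Sterm (v : C) (k : nat) : C := Cmult (RtoC (alpha k)) (Cpow v k).

Lemma Sterm_Cmod v k : Cmod (Sterm v k) <= Cmod v ^ k.
Proof.
  unfold Sterm. rewrite Cmod_mult, Cmod_R, Cmod_pow.
  pose proof (alpha_bound k). pose proof (pow_le (Cmod v) k (Cmod_ge_0 v)). nra.
Qed.

Lemma ex_Sterm v : Cmod v < 1 -> ex_series (fun k => Cmod (Sterm v k)).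
Proof.
  intros Hv. apply (exR_le _ (fun k => Cmod v ^ k)).
  - intros k. rewrite Rabs_right. apply Sterm_Cmod. apply Rle_ge, Cmod_ge_0.
  - apply ex_series_geom. rewrite Rabs_right; auto. apply Rle_ge, Cmod_ge_0.
Qed.

Definition Ssum (v : C) : C := (Series (fun k => Re (Sterm v k)), Series (fun k => Im (Sterm v k))).

Lemma S_is_series v : Cmod v < 1 -> is_series (Sterm v) (Ssum v).
Proof.
  intros Hv. pose proof (ex_Sterm v Hv).
  apply is_series_C; apply Series_correct; apply ex_series_Rabs.
  apply ex_abs_Re; auto. apply ex_abs_Im; auto.
Qed.

Lemma is_series_fin2 (a : nat -> R) : (forall n, a (S (S n)) = 0) -> is_series a (a 0%nat + a 1%nat).
Proof.
  intros H. apply is_series_Reals. intros eps He. exists 1%nat. intros n Hn.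
  assert (forall m, sum_f_R0 a (S m) = a 0%nat + a 1%nat).
  { induction m. reflexivity. simpl sum_f_R0. simpl sum_f_R0 in IHm. rewrite IHm, H. ring. }
  destruct n. lia. rewrite H0. unfold R_dist. rewrite Rminus_diag, Rabs_R0. auto.
Qed.

Lemma csum_RtoC (f : nat -> R) (w : C) n :
  sum_n (fun k => Cmult (RtoC (f k)) w) n = Cmult (RtoC (sum_f_R0 f n)) w.
Proof.
  induction n. rewrite sum_O. reflexivity.
  rewrite sum_Sn, IHn. simpl sum_f_R0. rewrite RtoC_plus. apply Ceq; simpl; ring.
Qed.

Lemma S_sq v : Cmod v < 1 -> Cmult (Ssum v) (Ssum v) = Cminus (RtoC 1) v.
Proof.
  intros Hv. pose proof (S_is_series v Hv) as HS. pose proof (ex_Sterm v Hv) as ES.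
  pose proof (CauchyC _ _ _ _ HS HS ES ES) as H.
  assert (H2 : is_series (fun n => Cmult (RtoC (conv n)) (Cpow v n)) (Cmult (Ssum v) (Ssum v))).
  { eapply is_series_ext; [|exact H]. intros n.
    transitivity (sum_n (fun k => Cmult (RtoC (alpha k * alpha (n - k))) (Cpow v n)) n).
    - apply sum_n_ext_loc. intros k Hk. unfold Sterm. toC.
      replace (Cpow v n) with (Cmult (Cpow v k) (Cpow v (n - k))).
      rewrite RtoC_mult. ring. rewrite <- Cpow_add_r. f_equal. lia.
    - rewrite csum_RtoC. reflexivity. }
  apply Ceq.
  - pose proof (is_series_Re _ _ H2) as R1.
    pose proof (is_series_fin2 (fun n => Re (Cmult (RtoC (conv n)) (Cpow v n)))) as R2.
    rewrite <- (is_series_unique _ _ R1). apply is_series_unique.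
    eapply is_series_R_eq. apply R2.
    + intros n. cbv beta. rewrite Re_RtoC_mult, conv_ge2. ring.
    + cbv beta. rewrite !Re_RtoC_mult, conv_0, conv_1. destruct v. unfold Re. simpl. ring.
    + reflexivity.
  - pose proof (is_series_Im _ _ H2) as R1.
    pose proof (is_series_fin2 (fun n => Im (Cmult (RtoC (conv n)) (Cpow v n)))) as R2.
    rewrite <- (is_series_unique _ _ R1). apply is_series_unique.
    eapply is_series_R_eq. apply R2.
    + intros n. cbv beta. rewrite Im_RtoC_mult, conv_ge2. ring.
    + cbv beta. rewrite !Im_RtoC_mult, conv_0, conv_1. destruct v. unfold Im. simpl. ring.
    + reflexivity.
Qed.

Lemma series_le_bound (a : nat -> R) (l c : R) :
  is_series a l -> (forall N, sum_f_R0 a N <= c) -> l <= c.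
Proof.
  intros H B. apply is_series_Reals in H. destruct (Rle_lt_dec l c); auto.
  destruct (H (l - c)) as [N HN]. lra. specialize (HN N (le_n N)). specialize (B N).
  unfold R_dist in HN. pose proof (Rle_abs (l - sum_f_R0 a N)). rewrite Rabs_minus_sym in HN. lra.
Qed.

Lemma sum_abs_alpha N : sum_f_R0 (fun k => Rabs (alpha (S k))) N = 1 - beta (S N).
Proof.
  rewrite <- sum_alpha. rewrite (decomp_sum alpha (S N)) by lia. simpl pred. simpl (alpha 0).
  rewrite (sum_eq _ (fun k => alpha (S k) * -1)).
  rewrite <- scal_sum. ring.
  intros i _. rewrite Rabs_left1. ring. apply alpha_S_nonpos.
Qed.

Lemma pow_le1 (r : R) k : 0 <= r <= 1 -> r ^ k <= 1.
Proof. intros H. induction k; simpl. lra. pose proof (pow_le r k (proj1 H)). nra. Qed.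

Lemma S_re_pos v : Cmod v < 1 -> 1 - Cmod v <= Re (Ssum v).
Proof.
  intros Hv. set (r := Cmod v). assert (Hr : 0 <= r) by apply Cmod_ge_0. assert (Hr1 : r < 1) by exact Hv.
  assert (ER : ex_series (fun k => Re (Sterm v k))).
  { apply ex_series_Rabs. apply ex_abs_Re. apply ex_Sterm; auto. }
  change (Re (Ssum v)) with (Series (fun k => Re (Sterm v k))).
  rewrite Series_incr_1 by auto.
  assert (E0 : Re (Sterm v 0) = 1) by (unfold Sterm; rewrite Re_RtoC_mult; simpl; ring).
  rewrite E0.
  set (u := fun k => Re (Sterm v (S k))).
  assert (Hu : forall k, Rabs (u k) <= Rabs (alpha (S k)) * r ^ (S k)).
  { intros k. unfold u, Sterm. rewrite Re_RtoC_mult, Rabs_mult. apply Rmult_le_compat_l. apply Rabs_pos.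
    unfold r. rewrite <- Cmod_pow. apply re_le_Cmod. }
  assert (Eb : ex_series (fun k => Rabs (alpha (S k)) * r ^ (S k))).
  { apply (exR_le _ (fun k => r ^ (S k))).
    - intros k. rewrite Rabs_right. pose proof (alpha_bound (S k)). pose proof (pow_le r (S k) Hr). nra.
      apply Rle_ge, Rmult_le_pos. apply Rabs_pos. apply pow_le; auto.
    - apply (exR_tail (fun k => r ^ k) 1). apply ex_series_geom. rewrite Rabs_right; lra. }
  assert (Hbound : Series (fun k => Rabs (alpha (S k)) * r ^ (S k)) <= r).
  { apply (series_le_bound _ _ r (Series_correct _ Eb)). intros N.
    apply Rle_trans with (r * sum_f_R0 (fun k => Rabs (alpha (S k))) N).
    - rewrite scal_sum. apply sum_Rle. intros k _. simpl.
      assert (r ^ k <= 1) by (apply pow_le1; lra). pose proof (Rabs_pos (alpha (S k))).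
      pose proof (pow_le r k Hr). assert (r * r ^ k <= r) by nra.
      apply Rmult_le_compat_l; auto.
    - rewrite sum_abs_alpha. pose proof (beta_bounds (S N)). nra. }
  assert (Hs : Rabs (Series u) <= Series (fun k => Rabs (alpha (S k)) * r ^ (S k))).
  { eapply Rle_trans. apply Series_Rabs. apply (ex_abs_le _ _ Hu Eb).
    apply Series_le; auto. intros; split; auto. apply Rabs_pos. }
  pose proof (Rle_abs (- Series u)). rewrite Rabs_Ropp in H. lra.
Qed.

Definition p (k : nat) : R := sqrt 2 * alpha k * (/ 2) ^ k.

Lemma sqrt2_pos : 0 < sqrt 2.
Proof. apply sqrt_lt_R0. lra. Qed.

Lemma p_bound k : Rabs (p k) <= sqrt 2 * (/ 2) ^ k.
Proof.
  unfold p. rewrite !Rabs_mult. rewrite (Rabs_right (sqrt 2)) by (left; apply sqrt2_pos).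
  rewrite (Rabs_right ((/2)^k)) by (apply Rle_ge, pow_le; lra).
  pose proof (alpha_bound k). pose proof sqrt2_pos. pose proof (pow_le (/2) k ltac:(lra)).
  assert (0 <= sqrt 2 * (/2)^k) by nra. nra.
Qed.

Lemma p_rec k : p k * (/ 2 - INR k) = -2 * (INR k + 1) * p (S k).
Proof.
  unfold p. pose proof (alpha_rec k). simpl pow.
  replace (-2 * (INR k + 1) * (sqrt 2 * alpha (S k) * (/ 2 * (/ 2) ^ k)))
    with (- sqrt 2 * (/2) ^ k * / 2 * ((2 * INR k + 2) * alpha (S k))) by field.
  rewrite H. field.
Qed.

Lemma exp_nat (a : R) k : exp (INR k * a) = exp a ^ k.
Proof.
  induction k. simpl. rewrite Rmult_0_l, exp_0. auto.
  rewrite S_INR, Rmult_plus_distr_r, Rmult_1_l, exp_plus, IHk. simpl. ring.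
Qed.

Lemma ex_p_exp (rho : R) : 0 <= rho -> exp rho < 2 ->
  ex_series (fun k => Rabs (p k) * exp ((INR k + / 2) * rho)).
Proof.
  intros H0 H2.
  apply (exR_le _ (fun k => sqrt 2 * exp (/2 * rho) * (exp rho / 2) ^ k)).
  - intros k. rewrite Rabs_right.
    2: { apply Rle_ge, Rmult_le_pos. apply Rabs_pos. left; apply exp_pos. }
    replace ((INR k + / 2) * rho) with (INR k * rho + / 2 * rho) by ring.
    rewrite exp_plus, exp_nat. unfold Rdiv. rewrite Rpow_mult_distr.
    pose proof (p_bound k). pose proof (exp_pos (/2 * rho)). pose proof (pow_le (exp rho) k (Rlt_le _ _ (exp_pos rho))).
    assert (0 <= exp rho ^ k * exp (/ 2 * rho)) by nra.
    replace (sqrt 2 * exp (/ 2 * rho) * (exp rho ^ k * (/ 2) ^ k)) with ((sqrt 2 * (/ 2) ^ k) * (exp rho ^ k * exp (/ 2 * rho))) by ring.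
    apply Rmult_le_compat_r; auto.
  - apply exR_scal. apply ex_series_geom. rewrite Rabs_right. pose proof (exp_pos rho). lra.
    apply Rle_ge. unfold Rdiv. apply Rmult_le_pos. left; apply exp_pos. lra.
Qed.

Lemma exp_half_lt2 : exp (/ 2) < 2.
Proof.
  assert (exp (/2) * exp (/2) = exp 1) by (rewrite <- exp_plus; f_equal; lra).
  pose proof exp_le_3. pose proof (exp_pos (/2)). nra.
Qed.

Lemma ex_p_poly (c : R) m : 0 <= c -> ex_series (fun k => Rabs (p k) * (INR k + c) ^ m).
Proof.
  intros Hc.
  apply (exR_le _ (fun k => (2 ^ m * INR (fact m) * exp (/ 2 * (c - / 2))) * (Rabs (p k) * exp ((INR k + / 2) * / 2)))).
  - intros k. pose proof (pos_INR k).
    rewrite Rabs_right. 2: { apply Rle_ge, Rmult_le_pos. apply Rabs_pos. apply pow_le. lra. }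
    pose proof (exp_term_le ((INR k + c) / 2) m ltac:(lra)).
    replace ((INR k + c) ^ m) with (2 ^ m * (((INR k + c) / 2) ^ m / INR (fact m)) * INR (fact m)).
    2: { unfold Rdiv. rewrite Rpow_mult_distr, pow_inv. field. split. apply not_0_INR, fact_neq_0. apply pow_nonzero. lra. }
    assert (exp ((INR k + c) / 2) = exp (/ 2 * (c - / 2)) * exp ((INR k + / 2) * / 2)).
    { rewrite <- exp_plus. f_equal. field. }
    rewrite H1 in H0. pose proof (Rabs_pos (p k)). pose proof (fact_pos m).
    pose proof (pow_lt 2 m ltac:(lra)).
    set (A := ((INR k + c) / 2) ^ m / INR (fact m)) in *.
    set (B := exp (/ 2 * (c - / 2))) in *. set (D := exp ((INR k + / 2) * / 2)) in *.
    set (P := Rabs (p k)) in *. set (Q := 2 ^ m) in *. set (Fm := INR (fact m)) in *.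
    assert (0 <= P * Q * Fm) by (apply Rmult_le_pos; [apply Rmult_le_pos|]; lra).
    replace (P * (Q * A * Fm)) with ((P * Q * Fm) * A) by ring.
    replace (Q * Fm * B * (P * D)) with ((P * Q * Fm) * (B * D)) by ring.
    apply Rmult_le_compat_l; auto.
  - apply exR_scal. apply ex_p_exp. lra. replace (/2) with (/2) by ring. apply exp_half_lt2.
Qed.

Fixpoint ff (x : R) (j : nat) : R :=
  match j with O => 1 | S i => ff x i * (x - INR i) end.

Lemma ff_front x j : ff x (S j) = x * ff (x - 1) j.
Proof.
  revert x. induction j; intros x. simpl. ring.
  change (ff x (S (S j))) with (ff x (S j) * (x - INR (S j))).
  rewrite IHj, S_INR. change (ff (x - 1) (S j)) with (ff (x - 1) j * (x - 1 - INR j)). ring.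
Qed.

Lemma stirling2_big n k : (n < k)%nat -> stirling2 n k = 0%nat.
Proof.
  revert k. induction n; intros k Hk.
  - destruct k. lia. reflexivity.
  - destruct k. lia. simpl. rewrite !IHn by lia. lia.
Qed.

Definition sg (n j : nat) : nat := match j with O => O | S i => stirling2 n i end.

Lemma stirling2_S n j : stirling2 (S n) j = (j * stirling2 n j + sg n j)%nat.
Proof. destruct j; reflexivity. Qed.

Lemma stirling_ff_gen (x : R) n m : (n <= m)%nat ->
  x ^ n = sum_f_R0 (fun j => INR (stirling2 n j) * ff x j) m.
Proof.
  revert m. induction n; intros m Hm.
  - simpl. induction m. simpl. ring. simpl. rewrite <- IHm by lia. destruct m; simpl; ring.
  - destruct m. lia. rewrite <- tech_pow_Rmult. rewrite (IHn (S m)) by lia.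
    rewrite scal_sum.
    rewrite (sum_eq _ (fun j => INR (stirling2 n j) * ff x (S j) + INR j * INR (stirling2 n j) * ff x j)).
    2: { intros i _. simpl. ring. }
    rewrite (sum_eq (fun j => INR (stirling2 (S n) j) * ff x j) (fun j => INR (sg n j) * ff x j + INR j * INR (stirling2 n j) * ff x j)).
    2: { intros i _. rewrite stirling2_S, plus_INR, mult_INR. ring. }
    rewrite (plus_sum (fun j => INR (stirling2 n j) * ff x (S j)) (fun j => INR j * INR (stirling2 n j) * ff x j)).
    rewrite (plus_sum (fun j => INR (sg n j) * ff x j) (fun j => INR j * INR (stirling2 n j) * ff x j)).
    f_equal.
    rewrite (decomp_sum (fun j => INR (sg n j) * ff x j) (S m)) by lia. simpl pred. simpl (sg n 0).
    simpl sum_f_R0 at 1. rewrite (stirling2_big n (S m)) by lia. simpl (INR 0). ring_simplify.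
    apply sum_eq. intros; reflexivity.
Qed.

Lemma stirling_ff (x : R) n : x ^ n = sum_f_R0 (fun j => INR (stirling2 n j) * ff x j) n.
Proof. apply stirling_ff_gen. lia. Qed.

Lemma ff_bound k j : Rabs (ff (/ 2 - INR k) j) <= (INR k + INR j + 1) ^ j.
Proof.
  induction j. simpl. rewrite Rabs_R1. lra.
  simpl ff. rewrite Rabs_mult. pose proof (pos_INR k). pose proof (pos_INR j).
  rewrite S_INR. simpl pow.
  assert (Rabs (/ 2 - INR k - INR j) <= INR k + (INR j + 1) + 1).
  { apply Rabs_le. lra. }
  assert ((INR k + INR j + 1) ^ j <= (INR k + (INR j + 1) + 1) ^ j) by (apply pow_incr; lra).
  pose proof (Rabs_pos (ff (/ 2 - INR k) j)). pose proof (Rabs_pos (/ 2 - INR k - INR j)).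
  pose proof (pow_le (INR k + INR j + 1) j ltac:(lra)).
  assert (Rabs (ff (/ 2 - INR k) j) <= (INR k + (INR j + 1) + 1) ^ j) by lra.
  rewrite Rmult_comm. apply Rmult_le_compat; auto.
Qed.

Lemma ex_E j : ex_series (fun k => p k * ff (/ 2 - INR k) j).
Proof.
  apply (exR_le _ (fun k => Rabs (p k) * (INR k + (INR j + 1)) ^ j)).
  - intros k. rewrite Rabs_mult. apply Rmult_le_compat_l. apply Rabs_pos.
    replace (INR k + (INR j + 1)) with (INR k + INR j + 1) by ring. apply ff_bound.
  - apply ex_p_poly. pose proof (pos_INR j). lra.
Qed.

Definition Ej (j : nat) : R := Series (fun k => p k * ff (/ 2 - INR k) j).

Lemma E_rec j : Ej (S j) = (1 - 2 * INR j) * Ej j.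
Proof.
  set (h := fun m => INR m * p m * ff (/ 2 - INR m) j).
  assert (H1 : Ej (S j) = -2 * Series h).
  { unfold Ej. rewrite (Series_incr_1_aux h). 2: { unfold h. simpl. ring. }
    rewrite <- Series_scal_l. apply Series_ext. intros k.
    rewrite ff_front. unfold h.
    replace (/ 2 - INR k - 1) with (/ 2 - INR (S k)) by (rewrite S_INR; ring).
    transitivity ((p k * (/ 2 - INR k)) * ff (/ 2 - INR (S k)) j). ring.
    rewrite p_rec, S_INR. ring. }
  assert (H2 : Series h = (/ 2 - INR j) * Ej j - Ej (S j)).
  { unfold Ej. rewrite <- Series_scal_l, <- Series_minus.
    - apply Series_ext. intros m. unfold h. simpl ff. ring.
    - apply exR_scal. apply ex_E.
    - apply ex_E. }
  rewrite H2 in H1. lra.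
Qed.

Lemma E_0 : Ej 0 = 1.
Proof.
  set (v := RtoC (/ 2)).
  assert (Hv : Cmod v < 1) by (unfold v; rewrite Cmod_R, Rabs_right; lra).
  pose proof (S_sq v Hv) as Hsq. pose proof (S_re_pos v Hv) as Hpos.
  assert (Hcm : Cmod v = / 2) by (unfold v; rewrite Cmod_R, Rabs_right; lra).
  assert (HIm : Im (Ssum v) = 0).
  { change (Im (Ssum v)) with (Series (fun k => Im (Sterm v k))).
    rewrite (Series_ext _ (fun _ => 0)). apply is_series_unique, is_series_zero.
    intros k. unfold Sterm, v. rewrite Im_RtoC_mult, <- RtoC_pow. simpl. ring. }
  assert (HRe : Ej 0 = sqrt 2 * Re (Ssum v)).
  { unfold Ej. change (Re (Ssum v)) with (Series (fun k => Re (Sterm v k))).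
    rewrite <- Series_scal_l. apply Series_ext. intros k. unfold Sterm, v, p.
    rewrite Re_RtoC_mult, <- RtoC_pow. simpl. ring. }
  assert (Hs : Re (Ssum v) * Re (Ssum v) = / 2).
  { assert (E := f_equal Re Hsq). destruct (Ssum v) as [a b]. unfold Im in HIm. simpl in HIm.
    unfold Re in *. simpl in *. subst b. unfold v in E. simpl in E. lra. }
  rewrite HRe. pose proof (sqrt_sqrt 2 ltac:(lra)). pose proof sqrt2_pos.
  set (s := Re (Ssum v)) in *. rewrite Hcm in Hpos.
  assert ((sqrt 2 * s) * (sqrt 2 * s) = 1) by (transitivity ((sqrt 2 * sqrt 2) * (s * s)); [ring| rewrite H, Hs; field]).
  assert (0 < sqrt 2 * s) by nra. nra.
Qed.

Lemma dfact_m3 : dfact_odd (-3) = -1.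
Proof. unfold dfact_odd. simpl. field. Qed.

Lemma dfact_S j : dfact_odd (2 * Z.of_nat (S j) - 3) = odd_dfact j.
Proof.
  destruct j.
  - unfold dfact_odd. simpl. field.
  - unfold dfact_odd.
    assert (E : (2 * Z.of_nat (S (S j)) - 3 = 2 * Z.of_nat (S j) - 1)%Z) by lia.
    rewrite E. assert (L : (0 <=? 2 * Z.of_nat (S j) - 1)%Z = true) by (apply Z.leb_le; lia).
    rewrite L. f_equal.
    replace (2 * Z.of_nat (S j) - 1 + 1)%Z with (Z.of_nat (S j) * 2)%Z by lia.
    rewrite Z.div_mul by lia. apply Nat2Z.id.
Qed.

Lemma E_closed j : Ej j = (-1) ^ (j + 1) * dfact_odd (2 * Z.of_nat j - 3).
Proof.
  induction j.
  - rewrite E_0. simpl. replace (2 * 0 - 3)%Z with (-3)%Z by reflexivity. rewrite dfact_m3. ring.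
  - rewrite E_rec, IHj, dfact_S. destruct j.
    + simpl. replace (2 * 0 - 3)%Z with (-3)%Z by reflexivity. rewrite dfact_m3. ring.
    + rewrite dfact_S. simpl odd_dfact. rewrite S_INR, !plus_INR.
      rewrite !pow_add. simpl. ring.
Qed.

Lemma ex_fsum (f : nat -> nat -> R) n : (forall j, ex_series (f j)) ->
  ex_series (fun k => sum_f_R0 (fun j => f j k) n).
Proof.
  intros H. induction n. simpl. apply H. simpl. apply exR_plus; auto.
Qed.

Lemma Series_fsum (f : nat -> nat -> R) n : (forall j, ex_series (f j)) ->
  Series (fun k => sum_f_R0 (fun j => f j k) n) = sum_f_R0 (fun j => Series (f j)) n.
Proof.
  intros H. induction n. simpl. reflexivity.
  simpl. rewrite Series_plus. rewrite IHn. auto. apply ex_fsum; auto. apply H.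
Qed.

Definition dn (n : nat) : R := Series (fun k => p k * (INR k - / 2) ^ n).

Lemma dn_coef n : dn n = coef3p3 n.
Proof.
  unfold dn, coef3p3.
  rewrite (Series_ext _ (fun k => (-1) ^ n * sum_f_R0 (fun j => INR (stirling2 n j) * (p k * ff (/ 2 - INR k) j)) n)).
  2: { intros k. replace (INR k - / 2) with (-1 * (/ 2 - INR k)) by ring.
       rewrite Rpow_mult_distr, (stirling_ff (/ 2 - INR k) n).
       transitivity ((-1)^n * (p k * sum_f_R0 (fun j => INR (stirling2 n j) * ff (/ 2 - INR k) j) n)). ring.
       f_equal. rewrite scal_sum. apply sum_eq. intros; ring. }
  rewrite Series_scal_l. rewrite (Series_fsum (fun j k => INR (stirling2 n j) * (p k * ff (/ 2 - INR k) j))).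
  2: { intros j. apply exR_scal. apply ex_E. }
  rewrite (sum_eq _ (fun j => INR (stirling2 n j) * Ej j)).
  2: { intros j _. unfold Ej. rewrite Series_scal_l. reflexivity. }
  rewrite (sum_eq (fun j => INR (stirling2 n j) * Ej j) (fun j => ((-1) ^ j * INR (stirling2 n j) * dfact_odd (2 * Z.of_nat j - 3)) * (-1))).
  2: { intros j _. rewrite E_closed, pow_add. ring. }
  rewrite <- scal_sum. rewrite pow_add. ring.
Qed.

Lemma Cexp_add a b : Cexp (Cplus a b) = Cmult (Cexp a) (Cexp b).
Proof.
  destruct a as [a1 a2], b as [b1 b2]. unfold Cexp. apply Ceq; simpl;
  rewrite exp_plus; [rewrite cos_plus | rewrite sin_plus]; ring.
Qed.

Lemma Cexp_0 : Cexp (RtoC 0) = RtoC 1.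
Proof. unfold Cexp. apply Ceq; simpl; rewrite exp_0, ?cos_0, ?sin_0; ring. Qed.

Lemma Cexp_nat k z : Cpow (Cexp z) k = Cexp (Cmult (RtoC (INR k)) z).
Proof.
  induction k.
  - simpl. replace (Cmult (RtoC 0) z) with (RtoC 0) by (apply Ceq; simpl; ring). rewrite Cexp_0. reflexivity.
  - rewrite Cpow_S, IHk, <- Cexp_add. f_equal. rewrite S_INR. apply Ceq; simpl; ring.
Qed.

Lemma Cmod_Cexp w : Cmod (Cexp w) = exp (Re w).
Proof.
  unfold Cmod, Cexp. simpl fst. simpl snd.
  replace ((exp (Re w) * cos (Im w)) ^ 2 + (exp (Re w) * sin (Im w)) ^ 2) with (exp (Re w) ^ 2).
  apply sqrt_pow2. left; apply exp_pos.
  pose proof (sin2_cos2 (Im w)). unfold Rsqr in H. simpl. nra.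
Qed.

Lemma ln2_lt_1 : ln 2 < 1.
Proof.
  pose proof (exp_quad 1 ltac:(lra)). rewrite <- (ln_exp 1). apply ln_increasing; lra.
Qed.

Lemma ln2_pos : 0 < ln 2.
Proof. rewrite <- ln_1. apply ln_increasing; lra. Qed.

Lemma cos_lb (y : R) : -2 <= y <= 2 -> 1 - y ^ 2 / 2 <= cos y.
Proof.
  intros H. destruct (pre_cos_bound y 0) as [H1 _]; try lra.
  unfold cos_approx, cos_term in H1. simpl in H1. lra.
Qed.

Lemma Re_w_pos (x y : R) : x ^ 2 + y ^ 2 < ln 2 ^ 2 -> 0 < 2 * (exp (- x) * cos y) - 1.
Proof.
  intros H. set (L := ln 2) in *. pose proof ln2_lt_1. pose proof ln2_pos. fold L in H0, H1.
  assert (HxL : x < L) by nra.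
  set (t := L - x). assert (Ht : 0 <= t) by (unfold t; lra).
  assert (HE : exp (- x) = exp t / 2).
  { unfold t, L. rewrite Rminus_def, exp_plus, exp_ln by lra. field. }
  pose proof (exp_quad t Ht). pose proof (cos_lb y ltac:(nra)).
  assert (Hy2 : y ^ 2 < 2 * L * t - t ^ 2) by (unfold t; nra).
  assert (Hpoly : 2 <= (1 + t + t ^ 2 / 2) * (2 - 2 * L * t + t ^ 2)).
  { assert (0 <= (2 - 2 * L) * t) by nra. assert (0 <= (2 - 2 * L) * t ^ 2) by nra.
    assert (0 <= (1 - L) * t ^ 3) by (apply Rmult_le_pos; [lra| apply pow_le; lra]).
    assert (0 <= t ^ 4) by (apply pow_le; lra).
    replace ((1 + t + t ^ 2 / 2) * (2 - 2 * L * t + t ^ 2)) with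
      (2 + (2 - 2 * L) * t + (2 - 2 * L) * t ^ 2 + (1 - L) * t ^ 3 + t ^ 4 / 2) by field. lra. }
  assert (Hq : 0 < 2 - 2 * L * t + t ^ 2) by nra.
  rewrite HE. pose proof (exp_pos t).
  assert (exp t * (2 - y ^ 2) > exp t * (2 - 2 * L * t + t ^ 2)) by (apply Rmult_lt_compat_l; lra).
  assert (exp t * (2 - 2 * L * t + t ^ 2) >= (1 + t + t ^ 2 / 2) * (2 - 2 * L * t + t ^ 2)) by (apply Rle_ge, Rmult_le_compat_r; lra).
  assert (2 * (exp t / 2 * cos y) >= exp t / 2 * (2 - y ^ 2)) by nra.
  lra.
Qed.

Lemma cos_gt_abs_sin (u : R) : Rabs u < / 2 -> Rabs (sin u) < cos u.
Proof.
  intros H. apply Rabs_def2 in H. pose proof (cos_lb u ltac:(lra)).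
  assert (7 / 8 <= cos u) by nra.
  pose proof (sin2_cos2 u). unfold Rsqr in H2.
  apply Rabs_def1; nra.
Qed.

Lemma sign_lemma (c1 c2 s1 s2 : R) :
  Rabs c2 < c1 -> 0 < s1 ->
  0 < (c1 * s1 - c2 * s2) ^ 2 - (c1 * s2 + c2 * s1) ^ 2 ->
  0 < c1 * s1 - c2 * s2.
Proof.
  intros Hc Hs Hw. set (g1 := c1 * s1 - c2 * s2) in *. set (g2 := c1 * s2 + c2 * s1) in *.
  assert (K : g1 * c1 + g2 * c2 = (c1 ^ 2 + c2 ^ 2) * s1) by (unfold g1, g2; ring).
  apply Rabs_def2 in Hc. destruct (Rle_lt_dec g1 0) as [Hg|Hg]; auto.
  exfalso. assert (0 < (c1 ^ 2 + c2 ^ 2) * s1) by (apply Rmult_lt_0_compat; nra).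
  assert (Habs : Rabs g2 < - g1) by (apply Rabs_def1; nra).
  apply Rabs_def2 in Habs. nra.
Qed.

Lemma Csqrt_sq (g : C) : 0 < Re g -> Csqrt (Cmult g g) = g.
Proof.
  destruct g as [g1 g2]. unfold Re. simpl fst. intros Hg.
  unfold Csqrt. 
  assert (Hm : Cmod (Cmult (g1, g2) (g1, g2)) = g1 ^ 2 + g2 ^ 2).
  { unfold Cmod. simpl fst; simpl snd.
    replace ((g1 * g1 - g2 * g2) ^ 2 + (g1 * g2 + g2 * g1) ^ 2) with ((g1 ^ 2 + g2 ^ 2) ^ 2) by ring.
    apply sqrt_pow2. nra. }
  rewrite Hm. unfold Re, Im. simpl fst; simpl snd.
  replace ((g1 ^ 2 + g2 ^ 2 + (g1 * g1 - g2 * g2)) / 2) with (g1 ^ 2) by field.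
  replace ((g1 ^ 2 + g2 ^ 2 - (g1 * g1 - g2 * g2)) / 2) with (g2 ^ 2) by field.
  rewrite sqrt_pow2 by lra.
  f_equal. destruct (Rle_dec 0 (g1 * g2 + g2 * g1)).
  - assert (0 <= g2) by nra. rewrite sqrt_pow2; lra.
  - assert (g2 < 0) by nra. replace (g2 ^ 2) with ((- g2) ^ 2) by ring. rewrite sqrt_pow2; lra.
Qed.

Lemma proj_fubini (proj : C -> R)
  (Hlin : forall r c, proj (Cmult (RtoC r) c) = r * proj c)
  (Hbd : forall c, Rabs (proj c) <= Cmod c)
  (Hser : forall a l, is_series a l -> is_series (fun n => proj (a n)) (proj l))
  (z : C) (G : C) :
  exp (Cmod z) < 2 ->
  is_series (fun k => Cmult (RtoC (p k)) (Cexp (Cmult (RtoC (INR k - / 2)) z))) G ->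
  is_series (fun n => dn n * (/ INR (fact n) * proj (Cpow z n))) (proj G).
Proof.
  intros Hz HG.
  set (zeta := fun k : nat => Cmult (RtoC (INR k - / 2)) z).
  set (a := fun k n => proj (Cmult (RtoC (p k)) (ec (zeta k) n))).
  set (A := fun k => proj (Cmult (RtoC (p k)) (Cexp (zeta k)))).
  set (b := fun k n => Rabs (p k) * (((INR k + / 2) * Cmod z) ^ n / INR (fact n))).
  set (M := fun k => Rabs (p k) * exp ((INR k + / 2) * Cmod z)).
  assert (HA : forall k, is_series (a k) (A k)).
  { intros k. unfold a, A. apply Hser.
    apply (@is_series_scal C_AbsRing C_NormedModule (RtoC (p k)) _ _ (Cexp_series (zeta k))). }
  assert (Hab : forall k n, Rabs (a k n) <= b k n).
  { intros k n. unfold a, b. eapply Rle_trans. apply Hbd.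
    rewrite Cmod_mult, Cmod_R, Cmod_ec. apply Rmult_le_compat_l. apply Rabs_pos.
    unfold Rdiv. apply Rmult_le_compat_r. left; apply Rinv_0_lt_compat, fact_pos.
    apply pow_incr. split. apply Cmod_ge_0. unfold zeta. rewrite Cmod_mult, Cmod_R.
    apply Rmult_le_compat_r. apply Cmod_ge_0. pose proof (pos_INR k). apply Rabs_le. lra. }
  assert (HM : forall k, is_series (b k) (M k)).
  { intros k. unfold b, M. apply (@is_series_scal R_AbsRing R_NormedModule (Rabs (p k))). apply exp_series. }
  assert (EM : ex_series M).
  { unfold M. apply ex_p_exp. apply Cmod_ge_0. auto. }
  assert (HC : forall n, is_series (fun k => a k n) (dn n * (/ INR (fact n) * proj (Cpow z n)))).
  { intros n.
    assert (Hd : is_series (fun k => p k * (INR k - / 2) ^ n) (dn n)).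
    { apply Series_correct.
      apply (exR_le _ (fun k => Rabs (p k) * (INR k + / 2) ^ n)).
      + intros k. rewrite Rabs_mult, <- (RPow_abs (INR k - / 2) n). apply Rmult_le_compat_l. apply Rabs_pos.
        apply pow_incr. split. apply Rabs_pos. pose proof (pos_INR k). apply Rabs_le. lra.
      + apply ex_p_poly. lra. }
    apply (is_series_R_eq _ _ _ _ (is_series_scal_r (/ INR (fact n) * proj (Cpow z n)) _ _ Hd)).
    - reflexivity.
    - intros k. unfold a, ec, zeta. rewrite Cpow_mult_l, <- RtoC_pow, !Hlin. ring. }
  pose proof (fubini a b A M _ HA Hab HM EM HC) as HF.
  replace (proj G) with (Series A). exact HF.
  apply is_series_unique. unfold A, zeta. apply Hser. exact HG.
Qed.

Theorem theorem3p3 (z : C) (hz : Cmod z < ln 2) :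
  is_series (fun n : nat => Cmult (RtoC (coef3p3 n / INR (fact n))) (Cpow z n))
    (Csqrt (Cminus (Cmult (RtoC 2) (Cexp (Copp z))) (RtoC 1))).
Proof.
  set (x := Re z). set (y := Im z).
  pose proof ln2_lt_1 as HL1. pose proof ln2_pos as HL0.
  assert (Hxy : x ^ 2 + y ^ 2 < ln 2 ^ 2).
  { assert (Cmod z ^ 2 = x ^ 2 + y ^ 2) by (unfold Cmod, x, y, Re, Im; rewrite pow2_sqrt; [ring| nra]).
    pose proof (Cmod_ge_0 z). nra. }
  assert (Hx : x < ln 2) by nra.
  assert (Hy : Rabs y < 1) by (apply Rabs_def1; nra).
  assert (Hexp2 : exp (ln 2) = 2) by (apply exp_ln; lra).
  set (v := Cmult (RtoC (/ 2)) (Cexp z)).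
  assert (Hv : Cmod v < 1).
  { unfold v. rewrite Cmod_mult, Cmod_R, Cmod_Cexp, Rabs_right by lra.
    pose proof (exp_increasing _ _ Hx). fold x. lra. }
  set (u := Cmult (RtoC (- / 2)) z).
  set (c := Cmult (RtoC (sqrt 2)) (Cexp u)).
  set (G := Cmult c (Ssum v)).
  set (w := Cminus (Cmult (RtoC 2) (Cexp (Copp z))) (RtoC 1)).
  assert (Hee : Cmult (Cexp (Copp z)) (Cexp z) = RtoC 1).
  { rewrite <- Cexp_add. replace (Cplus (Copp z) z) with (RtoC 0) by (apply Ceq; simpl; ring). apply Cexp_0. }
  assert (Hcc : Cmult c c = Cmult (RtoC 2) (Cexp (Copp z))).
  { unfold c. transitivity (Cmult (Cmult (RtoC (sqrt 2)) (RtoC (sqrt 2))) (Cmult (Cexp u) (Cexp u))). ring.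
    rewrite <- Cexp_add, <- RtoC_mult, sqrt_sqrt by lra. f_equal. f_equal. unfold u. apply Ceq; simpl; field. }
  assert (HG2 : Cmult G G = w).
  { unfold G. transitivity (Cmult (Cmult c c) (Cmult (Ssum v) (Ssum v))). ring.
    rewrite S_sq by auto. rewrite Hcc. unfold w, v.
    transitivity (Cminus (Cmult (RtoC 2) (Cexp (Copp z))) (Cmult (Cexp (Copp z)) (Cexp z))).
    - destruct (Cexp (Copp z)), (Cexp z). apply Ceq; simpl; field.
    - rewrite Hee. reflexivity. }
  assert (HRew : 0 < Re w).
  { unfold w. simpl. unfold Cexp. simpl. rewrite cos_neg. pose proof (Re_w_pos x y Hxy). unfold x, y in H.
    unfold Re, Im in *. simpl in *. lra. }
  assert (HReG : 0 < Re G).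
  { assert (Hs : 0 < Re (Ssum v)) by (pose proof (S_re_pos v Hv); lra).
    assert (Eu : u = (- / 2 * x, - / 2 * y)) by (unfold u, x, y; apply Ceq; unfold Re, Im; simpl; ring).
    assert (Ec : c = (sqrt 2 * (exp (- / 2 * x) * cos (- / 2 * y)), sqrt 2 * (exp (- / 2 * x) * sin (- / 2 * y)))).
    { unfold c. rewrite Eu. unfold Cexp. apply Ceq; unfold Re, Im; simpl; ring. }
    assert (Hc : Rabs (Im c) < Re c).
    { rewrite Ec. unfold Re, Im. simpl fst. simpl snd.
      pose proof (cos_gt_abs_sin (- / 2 * y)).
      assert (Rabs (- / 2 * y) < / 2) by (rewrite Rabs_mult, Rabs_left by lra; lra).
      specialize (H H0). pose proof sqrt2_pos. pose proof (exp_pos (- / 2 * x)).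
      rewrite !Rabs_mult, (Rabs_right (sqrt 2)), (Rabs_right (exp (- / 2 * x))) by lra.
      assert (0 < sqrt 2 * exp (- / 2 * x)) by nra.
      replace (sqrt 2 * (exp (- / 2 * x) * Rabs (sin (- / 2 * y)))) with ((sqrt 2 * exp (- / 2 * x)) * Rabs (sin (- / 2 * y))) by ring.
      replace (sqrt 2 * (exp (- / 2 * x) * cos (- / 2 * y))) with ((sqrt 2 * exp (- / 2 * x)) * cos (- / 2 * y)) by ring.
      apply Rmult_lt_compat_l; auto. }
    assert (HGG : 0 < Re (Cmult G G)) by (rewrite HG2; auto).
    unfold G in *. destruct c as [c1 c2], (Ssum v) as [s1 s2]. unfold Re, Im in *. simpl in *.
    apply sign_lemma; auto. simpl. nra. }
  assert (Hsqrt : Csqrt w = G) by (rewrite <- HG2; apply Csqrt_sq; auto).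
  assert (HGser : is_series (fun k => Cmult (RtoC (p k)) (Cexp (Cmult (RtoC (INR k - / 2)) z))) G).
  { apply (is_series_C_eq _ _ _ _ (@is_series_scal C_AbsRing C_NormedModule c _ _ (S_is_series v Hv))).
    - reflexivity.
    - intros k. change (scal c (Sterm v k)) with (Cmult c (Sterm v k)).
      transitivity (Cmult (RtoC (p k)) (Cmult (Cexp u) (Cexp (Cmult (RtoC (INR k)) z)))).
      + unfold c, Sterm, v, p. rewrite Cpow_mult_l, <- RtoC_pow, Cexp_nat. rewrite !RtoC_mult. ring.
      + rewrite <- Cexp_add. f_equal. f_equal. unfold u. apply Ceq; simpl; ring. }
  assert (Hz2 : exp (Cmod z) < 2) by (rewrite <- Hexp2; apply exp_increasing; auto).
  fold w. rewrite Hsqrt.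
  apply is_series_C.
  - eapply is_series_R_eq.
    + apply (proj_fubini Re Re_RtoC_mult re_le_Cmod is_series_Re z G Hz2 HGser).
    + reflexivity.
    + intros n. rewrite Re_RtoC_mult, dn_coef. unfold Rdiv. ring.
  - eapply is_series_R_eq.
    + apply (proj_fubini Im Im_RtoC_mult im_le_Cmod is_series_Im z G Hz2 HGser).
    + reflexivity.
    + intros n. rewrite Im_RtoC_mult, dn_coef. unfold Rdiv. ring.
Qed.
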